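(* Let $A,B,C$ be complex vector spaces with $\dim A\le \dim B=\dim C=\mathbf{b}$. Let $T\in A\otimes B\otimes C$ be a concise tensor such that the space $T(A^* )\subset B\otimes C$ has bounded rank $\mathbf{b}-1$ and is primitive. Then $T$ does not have border rank $\mathbf{b}$.
   Context: $T(A^* )$ is the image of the contraction $T_A:A^*\to B\otimes C$, a space of linear maps $B^*\to C$; write $\varphi(\alpha):B^*\to C$ for the map given by $\alpha\in A^*$. It has bounded rank $r$ if the maximal rank of its elements is $r<\min\{\dim B,\dim C\}$. $T$ is concise if the three induced maps $A^*\to B\otimes C$, $B^*\to A\otimes C$, $C^*\to A\otimes B$ are injective. A space $T(A^* )$ of bounded rank $r$ is imprimitive if there is a hyperplane $H\subset B^*$ such that all restrictions $\varphi(\alpha)|_H$ have rank $\le r-1$, or a hyperplane $H\subset C^*$ such that all restrictions $\varphi(\alpha)^{\mathbf t}|_H$ have rank $\le r-1$; otherwise it is primitive. Border rank of $T$: the smallest $s$ such that $T$ is a limit of sums of $s$ tensors of the form $a\otimes b\otimes c$. *)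

(* Defs.v *)
(* Complex numbers are modelled as R[i] = complex R for R : realType
   (a complete archimedean real field, i.e. the reals). Tensors in A (x) B (x) C are
   given in coordinates, with dim A = a, dim B = b, dim C = c. *)
From HB Require Import structures.
From mathcomp Require Import all_boot all_order all_algebra.
From mathcomp Require Import reals.
From mathcomp.real_closed Require Import complex.
Set Implicit Arguments. Unset Strict Implicit. Unset Printing Implicit Defensive.
Import Order.TTheory GRing.Theory Num.Theory.
Local Open Scope ring_scope.

Definition tensor (K : Type) (a b c : nat) := 'I_a -> 'I_b -> 'I_c -> K.

Section Tensors.
Variables (K : fieldType) (a b c : nat).
Implicit Types (T : tensor K a b c).

(* phi(alpha) : B^v -> C, as a b x c matrix acting on row vectors beta (beta *m M) *)
Definition slice T (alpha : 'I_a -> K) : 'M[K]_(b, c) :=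
  \matrix_(j, k) \sum_(i < a) alpha i * T i j k.

(* concise: the three contraction maps A^v -> B(x)C, B^v -> A(x)C, C^v -> A(x)B
   are injective (they are linear, so injectivity = trivial kernel) *)
Definition concise T : Prop :=
  [/\ (forall alpha : 'I_a -> K,
        (forall j k, \sum_(i < a) alpha i * T i j k = 0) -> forall i, alpha i = 0),
      (forall beta : 'I_b -> K,
        (forall i k, \sum_(j < b) beta j * T i j k = 0) -> forall j, beta j = 0)
    & (forall gamma : 'I_c -> K,
        (forall i j, \sum_(k < c) gamma k * T i j k = 0) -> forall k, gamma k = 0)].

Definition bounded_rank T (r : nat) : Prop :=
  [/\ (forall alpha, \rank (slice T alpha) <= r)%N,
      (exists alpha, \rank (slice T alpha) = r)
    & (r < minn b c)%N].

(* imprimitive (for bounded rank r): a hyperplane H of B^v (row space of a b x b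
   matrix of rank b-1) with all restrictions phi(alpha)|_H of rank <= r-1, or a
   hyperplane H of C^v with all phi(alpha)^t|_H of rank <= r-1 *)
Definition imprimitive T (r : nat) : Prop :=
  (exists H : 'M[K]_b, \rank H = b.-1 /\
     forall alpha, (\rank (H *m slice T alpha) < r)%N) \/
  (exists H : 'M[K]_c, \rank H = c.-1 /\
     forall alpha, (\rank (H *m (slice T alpha)^T) < r)%N).

Definition primitive T (r : nat) : Prop := ~ imprimitive T r.

End Tensors.

Section BorderRank.
Variables (R : realType) (a b c : nat).
Local Notation C := (R[i]).

(* T is a limit (entrywise, equivalently in the Euclidean topology of the finite-
   dimensional space A(x)B(x)C) of a sequence of sums of s rank-one tensors *)
Definition border_rank_le (T : tensor C a b c) (s : nat) : Prop :=
  exists (u : nat -> 'I_s -> 'I_a -> C) (v : nat -> 'I_s -> 'I_b -> C)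
         (w : nat -> 'I_s -> 'I_c -> C),
    forall i j k, forall eps : C, 0 < eps -> exists N : nat, forall n : nat, (N <= n)%N ->
      `| (\sum_(l < s) u n l i * v n l j * w n l k) - T i j k | < eps.

Definition has_border_rank (T : tensor C a b c) (s : nat) : Prop :=
  border_rank_le T s /\ forall s', border_rank_le T s' -> (s <= s')%N.

End BorderRank.

(* Main.v *)
Require Import Defs.
From HB Require Import structures.
From mathcomp Require Import all_boot all_order all_algebra.
From mathcomp Require Import reals.
From mathcomp.real_closed Require Import complex.
Set Implicit Arguments. Unset Strict Implicit. Unset Printing Implicit Defensive.
Import Order.TTheory GRing.Theory Num.Theory.
Local Open Scope ring_scope.

Section PolyTrick.
Variable K : fieldType.

Lemma cancel_det (R : idomainType) n (M N : 'M[R]_n) :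
  \det M != 0 -> M *m N = 0 -> N = 0.
Proof.
move=> dM MN.
have : \adj M *m M *m N = 0 by rewrite -mulmxA MN mulmx0.
rewrite mul_adj_mx mul_scalar_mx => /eqP; rewrite scalemx_eq0 (negbTE dM) /=.
by move/eqP.
Qed.

Definition pmx n (A : 'M[K]_n) : 'M[{poly K}]_n := char_poly_mx (- A).

Lemma det_pmx n (A : 'M[K]_n) : \det (pmx A) != 0.
Proof. exact: monic_neq0 (char_poly_monic _). Qed.

Lemma eval0_pmx n (A : 'M[K]_n) : map_mx (horner_eval 0) (pmx A) = A.
Proof.
apply/matrixP => i j; rewrite !mxE /horner_eval hornerD hornerN hornerC.
by rewrite hornerMn hornerX mul0rn sub0r opprK.
Qed.

Lemma adjM n (A B : 'M[K]_n) : \adj (A *m B) = \adj B *m \adj A.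
Proof.
set A' := pmx A; set B' := pmx B.
have dP : \det (A' *m B') != 0 by rewrite det_mulmx mulf_neq0 ?det_pmx.
have E : \adj (A' *m B') = \adj B' *m \adj A'.
  apply/eqP; rewrite -subr_eq0; apply/eqP; apply: (cancel_det dP).
  rewrite mulmxBr mul_mx_adj mulmxA -(mulmxA A') mul_mx_adj.
  rewrite mul_mx_scalar -scalemxAl mul_mx_adj scale_scalar_mx det_mulmx mulrC.
  by rewrite subrr.
have := congr1 (map_mx (horner_eval 0)) E.
by rewrite !map_mxM !map_mx_adj !map_mxM !eval0_pmx.
Qed.

Lemma adj_comm n (M A : 'M[K]_n) : M *m A = A *m M -> M *m \adj A = \adj A *m M.
Proof.
move=> MA.
set A' := pmx A; set M' := map_mx (@polyC K) M.
have C : M' *m A' = A' *m M'.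
  rewrite /A' /pmx /char_poly_mx mulmxBl mulmxBr scalar_mxC.
  by rewrite -!map_mxM mulmxN mulNmx MA.
have E : M' *m \adj A' = \adj A' *m M'.
  apply/eqP; rewrite -subr_eq0; apply/eqP; apply: (cancel_det (det_pmx A)).
  by rewrite mulmxBr !mulmxA -C -(mulmxA M') !mul_mx_adj scalar_mxC subrr.
have := congr1 (map_mx (horner_eval 0)) E.
rewrite !map_mxM !map_mx_adj !eval0_pmx.
have -> : map_mx (horner_eval 0) M' = M.
  by apply/matrixP => i j; rewrite !mxE /horner_eval hornerC.
by [].
Qed.
End PolyTrick.
Section Pid.
Variable K : fieldType.

Lemma cof_pid_row m r (i j : 'I_m.+1) : (r <= m)%N -> i != ord_max ->
  cofactor (pid_mx r : 'M[K]_m.+1) i j = 0.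
Proof.
move=> rm im; rewrite /cofactor.
case: (unliftP i ord_max) => [k' Ek|E]; last by rewrite E eqxx in im.
rewrite (expand_det_row _ k') big1 ?mulr0 // => l _.
rewrite !mxE -Ek /=.
have -> : (@ord_max m < r)%N = false by rewrite ltnNge /= rm.
by rewrite andbF mul0r.
Qed.

Lemma cof_pid m r (i j : 'I_m.+1) : (r <= m)%N -> (i != ord_max) || (j != ord_max) ->
  cofactor (pid_mx r : 'M[K]_m.+1) i j = 0.
Proof.
move=> rm /orP[im|jm]; first exact: cof_pid_row.
by rewrite -cofactor_tr tr_pid_mx cof_pid_row.
Qed.

Lemma adj_pid m r : (r <= m)%N ->
  \adj (pid_mx r : 'M[K]_m.+1) = cofactor (pid_mx r : 'M[K]_m.+1) ord_max ord_max *: delta_mx ord_max ord_max.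
Proof.
move=> rm; apply/matrixP => i j; rewrite !mxE.
case: (eqVneq i ord_max) => [->|im]; case: (eqVneq j ord_max) => [->|jm] /=;
  rewrite ?mulr1 ?mulr0 // cof_pid // ?im ?jm ?orbT //.
Qed.

Lemma cof_pid_max m :
  cofactor (pid_mx m : 'M[K]_m.+1) ord_max ord_max = 1.
Proof.
rewrite /cofactor -signr_odd addnn odd_double expr0 mul1r.
have -> : row' ord_max (col' ord_max (pid_mx m : 'M[K]_m.+1)) = 1%:M.
  apply/matrixP => i j; rewrite !mxE !lift_max /= (ltn_ord i) andbT.
  by [].
exact: det1.
Qed.

Lemma adj_unit n (A : 'M[K]_n) : A \in unitmx -> \adj A \in unitmx.
Proof.
move=> uA; have -> : \adj A = \det A *: invmx A.
  by rewrite /invmx uA scalerA mulfV ?scale1r // -unitfE -unitmxE.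
by rewrite unitmxZ ?unitmx_inv // -unitmxE.
Qed.

Lemma adj_decomp n (Y : 'M[K]_n) : \adj Y =
  \adj (row_ebase Y) *m \adj (pid_mx (\rank Y)) *m \adj (col_ebase Y).
Proof. by rewrite -{1}(mulmx_ebase Y) !adjM mulmxA. Qed.

Lemma adj_rank_le1 n (Y : 'M[K]_n) : \det Y = 0 -> (\rank (\adj Y) <= 1)%N.
Proof.
case: n Y => [|m] Y dY; first by rewrite thinmx0 mxrank0.
have rY : (\rank Y <= m)%N.
  rewrite -ltnS ltn_neqAle rank_leq_row andbT; apply/negP => /eqP rf.
  have : Y \in unitmx by rewrite -row_free_unit /row_free rf.
  by rewrite unitmxE dY unitr0.
rewrite adj_decomp adj_pid //.
apply: leq_trans (mxrankM_maxl _ _) _; apply: leq_trans (mxrankM_maxr _ _) _.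
by apply: leq_trans (mxrank_scale _ _) _; rewrite mxrank_delta.
Qed.

Lemma adj_neq0 m (Y : 'M[K]_m.+1) : \rank Y = m -> \adj Y != 0.
Proof.
move=> rY; rewrite adj_decomp rY adj_pid // cof_pid_max scale1r.
apply/eqP => E.
have := congr1 (fun X => invmx (\adj (row_ebase Y)) *m X *m invmx (\adj (col_ebase Y))) E.
rewrite /= !mulmxA mulVmx ?adj_unit ?row_ebase_unit // mul1mx -mulmxA mulmxV ?adj_unit ?col_ebase_unit //.
rewrite mulmx1 mulmx0 mul0mx => /matrixP/(_ ord_max ord_max).
by rewrite !mxE !eqxx /= => /eqP; rewrite oner_eq0.
Qed.
End Pid.
From Stdlib Require Import Classical.

Section Lin.
Variable K : fieldType.

Lemma col_mulmx m n p (A : 'M[K]_(m, n)) (B : 'M_(n, p)) j :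
  A *m col j B = col j (A *m B).
Proof. by apply/matrixP => i k; rewrite !mxE; apply: eq_bigr => l _; rewrite !mxE. Qed.

Lemma nz_col m n (C : 'M[K]_(m, n)) : C != 0 -> exists j, col j C != 0.
Proof.
move=> /eqP CN; apply: NNPP => H; apply: CN; apply/matrixP => i j.
have : col j C = 0 by apply: NNPP => Hj; apply: H; exists j; apply/eqP.
by move/matrixP/(_ i 0); rewrite !mxE.
Qed.

Lemma nz_row m n (C : 'M[K]_(m, n)) : C != 0 -> exists i, row i C != 0.
Proof.
move=> CN; have [j Hj] : exists j, col j C^T != 0 by apply: nz_col; rewrite trmx_eq0.
by exists j; move: Hj; rewrite -trmx_eq0 tr_col trmxK.
Qed.

Lemma nz_entry_cV n (p : 'cV[K]_n) : p != 0 -> exists i, p i 0 != 0.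
Proof.
move=> /eqP pN; apply: NNPP => H; apply: pN; apply/matrixP => i j.
rewrite ord1 !mxE; apply: NNPP => Hi; apply: H; exists i; exact/eqP.
Qed.

Lemma rank1_decomp n (A : 'M[K]_n) : (\rank A <= 1)%N -> A != 0 ->
  exists i0 (p : 'cV_n), p != 0 /\ A = p *m row i0 A /\ row i0 A != 0.
Proof.
move=> rA AN; have [i0 Hi0] := nz_row AN.
have sAq : (A <= row i0 A)%MS.
  have := mxrank_leqif_sup (row_sub i0 A); case => _ <-.
  by rewrite eqn_leq mxrankS ?row_sub // rank_rV Hi0 /=; apply: leq_trans rA _.
exists i0, (A *m pinvmx (row i0 A)); rewrite (mulmxKpV sAq); split => //.
by apply: contraNneq AN => E; rewrite -(mulmxKpV sAq) E mul0mx.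
Qed.

Lemma kernel1 m (Y : 'M[K]_m.+1) (q x0 : 'rV_m.+1) : \rank Y = m ->
  q *m Y = 0 -> x0 *m Y = 0 -> x0 != 0 -> (q <= x0)%MS.
Proof.
move=> rY qY xY xN.
have sq : (q <= kermx Y)%MS by apply/sub_kermxP.
have sx : (x0 <= kermx Y)%MS by apply/sub_kermxP.
have := mxrank_leqif_sup sx; case => _ E.
have : (kermx Y <= x0)%MS by rewrite -E mxrank_ker rY rank_rV xN subSnn.
exact: submx_trans sq.
Qed.

End Lin.
From mathcomp Require Import zify.

Section Main.
Variable K : numFieldType.
Variables (a m : nat) (N : ('I_a -> K) -> 'M[K]_m.+1).
Local Notation n := m.+1.
Hypothesis NL : forall al be t, N (fun i => al i + t * be i) = N al + t *: N be.
Hypothesis H1 : forall al, \det (N al) = 0.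
Hypothesis H3 : forall al be ga,
  N al *m \adj (N be) *m N ga = N ga *m \adj (N be) *m N al.
Hypothesis H4 : forall x : 'rV_n, (forall al, x *m N al = 0) -> x = 0.
Hypothesis H5 : forall x : 'cV_n, (forall al, N al *m x = 0) -> x = 0.

Lemma mul_cr k (u : 'cV[K]_n) (v : 'rV_k) i j : (u *m v) i j = u i 0 * v 0 j.
Proof. by rewrite mxE big_ord1. Qed.

Lemma line_lemma be (p : 'cV_n) (q : 'rV_n) : p != 0 -> \adj (N be) = p *m q ->
  exists r : 'rV_n, forall al, exists c, q *m N al = c *: r.
Proof.
move=> pN Ad.
have [al1 H] : exists al1, N al1 *m p != 0.
  apply: NNPP => H; move/eqP: pN; apply; apply: H5 => al.
  by apply: NNPP => H'; apply: H; exists al; apply/eqP.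
have [i Hi] := nz_entry_cV H.
exists (q *m N al1) => al.
exists ((N al *m p) i 0 / (N al1 *m p) i 0).
have E : (N al1 *m p) *m (q *m N al) = (N al *m p) *m (q *m N al1).
  by move: (H3 al1 be al); rewrite Ad !mulmxA.
apply/matrixP => z j; rewrite ord1.
have E' : (N al1 *m p) i 0 * (q *m N al) 0 j = (N al *m p) i 0 * (q *m N al1) 0 j.
  by move: (congr1 (fun M : 'M[K]_n => M i j) E); rewrite /= !mul_cr.
by rewrite [in RHS]mxE mulrAC -E' mulrAC mulfV // mul1r.
Qed.


Lemma evC_mx k l (A : 'M[K]_(k, l)) t :
  map_mx (horner_eval t) (map_mx (@polyC K) A) = A.
Proof. by apply/matrixP => i j; rewrite !mxE /horner_eval hornerC. Qed.

Lemma main_alg : (exists al0, \rank (N al0) = m) ->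
  exists H : 'M[K]_n, \rank H = m /\ forall al, (\rank (H *m N al) < m)%N.
Proof.
move=> [al0 rY0]; set Y0 := N al0.
have A0N : \adj Y0 != 0 := adj_neq0 rY0.
have [i0 [p0 [p0N [A0d q0N]]]] := rank1_decomp (adj_rank_le1 (H1 al0)) A0N.
set q0 := row i0 (\adj Y0) in A0d q0N.
have q0Y : q0 *m Y0 = 0 by rewrite /q0 -row_mul mul_adj_mx H1 -scalemx1 scale0r row0.
have [ga Hga] : exists ga, q0 *m N ga != 0.
  apply: NNPP => H; move/eqP: q0N; apply; apply: H4 => al.
  by apply: NNPP => H'; apply: H; exists al; apply/eqP.
set W := N ga in Hga.
have dYt t : \det (Y0 + t *: W) = 0 by rewrite /Y0 /W -NL H1.
set Yp : 'M[{poly K}]_n := map_mx polyC Y0 + 'X *: map_mx polyC W.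
have evY t : map_mx (horner_eval t) Yp = Y0 + t *: W.
  apply/matrixP => i j; rewrite !mxE /horner_eval hornerD hornerM hornerX !hornerC //.
set Rp := \adj Yp *m map_mx polyC W.
have evR t : map_mx (horner_eval t) Rp = \adj (Y0 + t *: W) *m W.
  by rewrite map_mxM map_mx_adj evY evC_mx.
set M0 := (\sum_i \sum_j size (Rp i j))%N.
set E := (\adj Y0 + \sum_(k < M0) \adj (Y0 + (k.+1)%:R *: W))%MS.
set F := E *m Y0.
have sA0E : (\adj Y0 <= E)%MS := addsmxSl _ _.
have sAkE (k : 'I_M0) : (\adj (Y0 + (k.+1)%:R *: W) <= E)%MS.
  by apply: submx_trans (addsmxSr _ _); apply: (sumsmx_sup k).
have C0 (k : 'I_M0) : (\adj (Y0 + (k.+1)%:R *: W) *m W <= F)%MS.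
  set t : K := (k.+1)%:R; set A := \adj _.
  have tN : t != 0 by rewrite pnatr_eq0.
  have E0 : A *m Y0 + t *: (A *m W) = 0.
    by rewrite scalemxAr -mulmxDr mul_adj_mx dYt -scalemx1 scale0r.
  have E1 : t *: (A *m W) = - (A *m Y0) by apply/eqP; rewrite -addr_eq0 addrC E0.
  have -> : A *m W = (- t^-1) *: (A *m Y0) by rewrite scaleNr -scalerN -E1 scalerA mulVf // scale1r.
  by apply: scalemx_sub; rewrite /F; apply: submxMr; apply: sAkE.
have C1 : (\adj Y0 *m W <= F)%MS.
  rewrite submxE; set C := cokermx F.
  set Q := Rp *m map_mx polyC C.
  have Qz : Q = 0.
    apply/matrixP => i j; rewrite [RHS]mxE.
    apply: (@roots_geq_poly_eq0 _ _ [seq (k.+1)%:R | k <- iota 0 M0]).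
    - apply/allP => x /mapP [k kI ->]; rewrite mem_iota add0n in kI.
      have kI' : (k < M0)%N by case/andP: kI.
      have h : (map_mx (horner_eval (k.+1)%:R) Q) i j = 0.
        rewrite /Q map_mxM evR evC_mx.
        by have := C0 (Ordinal kI'); rewrite submxE => /eqP ->; rewrite mxE.
      by apply/eqP; move: h; rewrite mxE.
    - rewrite map_inj_uniq ?iota_uniq // => x y /eqP; rewrite eqr_nat eqSS => /eqP.
      by [].
    - rewrite size_map size_iota /Q mxE.
      elim/big_ind: _ => [|x y Hx Hy|l _]; first by rewrite size_poly0.
        by apply: leq_trans (size_polyD _ _) _; rewrite geq_max Hx Hy.
      rewrite [X in Rp i l * X]mxE mulrC mul_polyC; apply: leq_trans (size_scale_leq _ _) _.
      by rewrite /M0 (bigD1 i) //= (bigD1 l) //= -addnA leq_addr.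
  have := congr1 (map_mx (horner_eval 0)) Qz.
  by rewrite map_mxM evR evC_mx scale0r addr0 map_mx0 => ->.
have C2 : (q0 *m W <= F)%MS.
  by rewrite /q0 -row_mul; apply: submx_trans C1; apply: row_sub.
have [r0 Hr0] := line_lemma p0N A0d.
have C3 al : (q0 *m N al <= F)%MS.
  have [cW EW] := Hr0 ga; have [c EA] := Hr0 al.
  have cWN : cW != 0 by apply: contraNneq Hga => cz; rewrite /W EW cz scale0r.
  have -> : q0 *m N al = (c / cW) *: (q0 *m W) by rewrite EA /W EW scalerA divfK.
  exact: scalemx_sub.
have C4 (k : 'I_M0) al : (\adj (Y0 + (k.+1)%:R *: W) *m N al <= F)%MS.
  set t : K := (k.+1)%:R; set A := \adj _.
  case: (eqVneq A 0) => [->|AN]; first by rewrite mul0mx sub0mx.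
  have [i [p [pN [Ad qN]]]] := rank1_decomp (adj_rank_le1 (dYt t)) AN.
  set q := row i A in Ad qN.
  have qYt : q *m (Y0 + t *: W) = 0.
    by rewrite /q -row_mul mul_adj_mx dYt -scalemx1 scale0r row0.
  have Ad' : \adj (N (fun j => al0 j + t * ga j)) = p *m q by rewrite NL; exact: Ad.
  have [r Hr] := line_lemma pN Ad'.
  suff sq : (q *m N al <= F)%MS by rewrite /A Ad -mulmxA; apply: submx_trans sq; apply: submxMl.
  case: (eqVneq (q *m Y0) 0) => [qY0|qY0N].
    have /sub_rVP [kap ->] := kernel1 rY0 qY0 q0Y q0N.
    by rewrite -scalemxAl; apply: scalemx_sub.
  have [c0 E0] := Hr al0; have [c Ec] := Hr al.
  have c0N : c0 != 0 by apply: contraNneq qY0N => cz; rewrite /Y0 E0 cz scale0r.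
  have -> : q *m N al = (c / c0) *: (q *m Y0) by rewrite Ec /Y0 E0 scalerA divfK.
  apply: scalemx_sub; apply: submxMr; apply: submx_trans (sAkE k); exact: row_sub.
have C5 al : (E *m N al <= F)%MS.
  rewrite addsmxMr addsmx_sub; apply/andP; split.
    by rewrite A0d -mulmxA; apply: submx_trans (C3 al); apply: submxMl.
  by rewrite sumsmxMr; apply/sumsmx_subP => k _; apply: C4.
have C6 : (\rank F < \rank E)%N.
  have := mxrank_mul_ker E Y0.
  have : (q0 <= E :&: kermx Y0)%MS.
    by rewrite sub_capmx sub_kermx q0Y eqxx andbT; apply: submx_trans sA0E; apply: row_sub.
  move/mxrankS; rewrite rank_rV q0N /= => h1 h2.
  rewrite /F; lia.
case: (eqVneq (\rank E) n) => [Ef|En].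
  exfalso.
  have sF al : (N al <= F)%MS.
    apply: submx_trans (C5 al); rewrite -{1}(mul1mx (N al)); apply: submxMr.
    by apply: submx_full; rewrite /row_full Ef.
  have CN : cokermx F != 0.
    apply/eqP => cz; have := mxrank_coker F; rewrite cz mxrank0; lia.
  have [j Hj] := nz_col CN; move/eqP: Hj; apply; apply: H5 => al.
  by rewrite col_mulmx; move: (sF al); rewrite submxE => /eqP ->; apply/matrixP => x y; rewrite !mxE.
have CN : cokermx E != 0.
  apply/eqP => cz; have := mxrank_coker E; rewrite cz mxrank0.
  have := rank_leq_col E; lia.
have [j Hj] := nz_col CN; set phi := col j (cokermx E) in Hj.
have rphi : \rank phi = 1%N by rewrite -mxrank_tr rank_rV trmx_eq0 Hj.
exists (kermx phi); split; first by rewrite mxrank_ker rphi subn1.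
have sEH : (E <= kermx phi)%MS.
  rewrite sub_kermx /phi col_mulmx mulmx_coker; apply/eqP/matrixP => x y; rewrite !mxE //.
move=> al; have h1 := mxrank_mul_ker (kermx phi) (N al).
have h2 := mxrank_mul_ker E (N al).
have h3 := mxrankS (C5 al).
have h4 := mxrankS (capmxS sEH (submx_refl (kermx (N al)))).
rewrite mxrank_ker rphi subn1 /= in h1.
have h : (\rank (kermx phi *m N al) < m)%N by lia.
exact: h.
Qed.

End Main.

Section StrassenDec.
Variable K : fieldType.

Lemma diag_comm n (d1 d2 : 'rV[K]_n) :
  diag_mx d1 *m diag_mx d2 = diag_mx d2 *m diag_mx d1.
Proof.
apply/matrixP => i j; rewrite !mul_diag_mx !mxE.
case: (eqVneq i j) => [->|ij]; last by rewrite !mulr0n !mulr0.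
by rewrite !mulr1n mulrC.
Qed.

Lemma strassen_prod n (V W : 'M[K]_n) (d1 d2 d3 : 'rV[K]_n) :
  let X d := V *m diag_mx d *m W in
  X d1 *m \adj (X d2) *m X d3 = X d3 *m \adj (X d2) *m X d1.
Proof.
move=> X; rewrite /X !adjM.
suff E : forall e1 e3, V *m diag_mx e1 *m W *m (\adj W *m (\adj (diag_mx d2) *m \adj V)) *m (V *m diag_mx e3 *m W)
   = (\det W * \det V) *: (V *m (\adj (diag_mx d2) *m (diag_mx e1 *m diag_mx e3)) *m W).
  by rewrite !E diag_comm.
move=> e1 e3.
have c1 : diag_mx e1 *m \adj (diag_mx d2) = \adj (diag_mx d2) *m diag_mx e1.
  by apply: adj_comm; apply: diag_comm.
rewrite !mulmxA -(mulmxA _ W) mul_mx_adj mul_mx_scalar -!scalemxAl.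
rewrite -(mulmxA _ (\adj V)) mul_adj_mx mul_mx_scalar -!scalemxAl !scalemxAl scalerA.
by rewrite -!mulmxA (mulmxA (diag_mx e1)) c1 !mulmxA.
Qed.

End StrassenDec.
From mathcomp Require Import ring.
From mathcomp Require Import perm.

Section Conv.
Variable K : numFieldType.

Definition nul (x : nat -> K) := forall eps : K, 0 < eps ->
  exists N : nat, forall n, (N <= n)%N -> `|x n| < eps.

Lemma nul_eq x y : (forall n, x n = y n) -> nul x -> nul y.
Proof. by move=> E hx eps e0; have [N h] := hx eps e0; exists N => n hn; rewrite -E; apply: h. Qed.

Lemma nul0 : nul (fun _ => 0).
Proof. by move=> eps e0; exists 0%N => n _; rewrite normr0. Qed.

Lemma nulD x y : nul x -> nul y -> nul (fun n => x n + y n).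
Proof.
move=> hx hy eps e0.
have e2 : 0 < eps / 2%:R by rewrite divr_gt0 // ltr0n.
have [N1 h1] := hx _ e2; have [N2 h2] := hy _ e2.
exists (maxn N1 N2) => n hn.
apply: le_lt_trans (ler_normD _ _) _; rewrite [eps]splitr.
apply: ltrD; [apply: h1 | apply: h2]; [exact: leq_trans (leq_maxl _ _) hn | exact: leq_trans (leq_maxr _ _) hn].
Qed.

Lemma nulZ c x : nul x -> nul (fun n => c * x n).
Proof.
move=> hx eps e0; case: (eqVneq c 0) => [->|cN].
  by exists 0%N => n _; rewrite mul0r normr0.
have cp : 0 < `|c| by rewrite normr_gt0.
have [N h] := hx (eps / `|c|) (divr_gt0 e0 cp).
exists N => n hn; rewrite normrM -ltr_pdivlMl //.
by rewrite mulrC; apply: h.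
Qed.

Lemma nulM x y : nul x -> nul y -> nul (fun n => x n * y n).
Proof.
move=> hx hy eps e0.
have [N1 h1] := hx 1 ltr01; have [N2 h2] := hy _ e0.
exists (maxn N1 N2) => n hn; rewrite normrM.
apply: le_lt_trans (ler_piMl _ _) _ => //.
  by apply/ltW; apply: h1; exact: leq_trans (leq_maxl _ _) hn.
by apply: h2; exact: leq_trans (leq_maxr _ _) hn.
Qed.

Variables (a b c : nat) (S : nat -> tensor K a b c) (T : tensor K a b c).
Definition cv (g : tensor K a b c -> K) := nul (fun n => g (S n) - g T).

Lemma cv_const k : cv (fun _ => k).
Proof. by move=> eps e0; exists 0%N => n _; rewrite subrr normr0. Qed.

Lemma cv_add f g : cv f -> cv g -> cv (fun t => f t + g t).
Proof. by move=> hf hg; apply: nul_eq (nulD hf hg) => n; ring. Qed.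

Lemma cv_scale k f : cv f -> cv (fun t => k * f t).
Proof. by move=> hf; apply: nul_eq (nulZ k hf) => n; ring. Qed.

Lemma cv_mul f g : cv f -> cv g -> cv (fun t => f t * g t).
Proof.
move=> hf hg.
apply: nul_eq (nulD (nulD (nulM hf hg) (nulZ (f T) hg)) (nulZ (g T) hf)) => n; ring.
Qed.

Lemma cv_sum (I : Type) (r : seq I) (F : I -> tensor K a b c -> K) :
  (forall i, cv (F i)) -> cv (fun t => \sum_(i <- r) F i t).
Proof.
move=> hF; elim: r => [|i r IH].
  by apply: nul_eq (cv_const 0) => n; rewrite !big_nil.
by apply: nul_eq (cv_add (hF i) IH) => n; rewrite !big_cons.
Qed.

Lemma cv_prod (I : Type) (r : seq I) (F : I -> tensor K a b c -> K) :
  (forall i, cv (F i)) -> cv (fun t => \prod_(i <- r) F i t).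
Proof.
move=> hF; elim: r => [|i r IH].
  by apply: nul_eq (cv_const 1) => n; rewrite !big_nil.
by apply: nul_eq (cv_mul (hF i) IH) => n; rewrite !big_cons.
Qed.

End Conv.

Section MConv.
Variable K : numFieldType.
Variables (a b c : nat) (S : nat -> tensor K a b c) (T : tensor K a b c).
Local Notation cv := (cv S T).
Hypothesis Hent : forall i j k, cv (fun t => t i j k).

Definition mcv p q (F : tensor K a b c -> 'M[K]_(p, q)) :=
  forall i j, cv (fun t => F t i j).

Lemma mcv_mul p q r (F : _ -> 'M[K]_(p, q)) (G : _ -> 'M[K]_(q, r)) :
  mcv F -> mcv G -> mcv (fun t => F t *m G t).
Proof.
move=> hF hG i j.
apply: nul_eq (cv_sum (index_enum _) (F := fun k t => F t i k * G t k j) (fun k => cv_mul (hF i k) (hG k j))) => n.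
by rewrite !mxE.
Qed.

Lemma mcv_sub p q (F G : _ -> 'M[K]_(p, q)) :
  mcv F -> mcv G -> mcv (fun t => F t - G t).
Proof.
move=> hF hG i j.
apply: nul_eq (cv_add (hF i j) (cv_scale (-1) (hG i j))) => n.
by rewrite !mxE !mulN1r.
Qed.

Lemma cv_det p (F : _ -> 'M[K]_p) : mcv F -> cv (fun t => \det (F t)).
Proof.
move=> hF.
have h1 : forall s : 'S_p, cv (fun t => (-1) ^+ s * \prod_i F t i (s i)).
  move=> s; apply: cv_scale; exact: (cv_prod (index_enum _) (F := fun i t => F t i (s i))).
have := cv_sum (index_enum _) h1.
by apply: nul_eq.
Qed.

Lemma mcv_adj p (F : _ -> 'M[K]_p) : mcv F -> mcv (fun t => \adj (F t)).
Proof.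
move=> hF i j.
have h : mcv (fun t => row' j (col' i (F t))) by move=> x y; apply: nul_eq (hF _ _) => n; rewrite !mxE.
apply: nul_eq (cv_scale ((-1) ^+ (j + i)) (cv_det h)) => n.
by rewrite !mxE.
Qed.

Lemma mcv_slice al : mcv (fun t => slice t al).
Proof.
move=> j k.
apply: nul_eq (cv_sum (index_enum _) (F := fun i t => al i * t i j k) (fun i => cv_scale _ (Hent _ _ _))) => n.
by rewrite !mxE.
Qed.

Lemma cv_lim0 (f : tensor K a b c -> K) : cv f -> (forall n, f (S n) = 0) -> f T = 0.
Proof.
move=> hf h0; apply/eqP; apply: contraT => fN.
have fp : 0 < `|f T| by rewrite normr_gt0.
have [N hN] := hf `|f T| fp.
by have := hN N (leqnn N); rewrite h0 sub0r normrN ltxx.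
Qed.
End MConv.

Lemma slice_dec (K : fieldType) a n (u : 'I_n -> 'I_a -> K) (v w : 'I_n -> 'I_n -> K) al :
  slice (fun i j k => \sum_(l < n) u l i * v l j * w l k) al =
  (\matrix_(j, l) v l j) *m diag_mx (\row_l \sum_i al i * u l i) *m (\matrix_(l, k) w l k).
Proof.
apply/matrixP => j k; rewrite mul_mx_diag !mxE.
under eq_bigr do rewrite mulr_sumr.
rewrite exchange_big; apply: eq_bigr => l _; rewrite !mxE mulr_sumr mulr_suml.
by apply: eq_bigr => i _; ring.
Qed.

Lemma slice_lin (K : fieldType) a b c (T : tensor K a b c) al be t :
  slice T (fun i => al i + t * be i) = slice T al + t *: slice T be.
Proof.
apply/matrixP => j k; rewrite !mxE mulr_sumr -big_split; apply: eq_bigr => i _ /=; ring.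
Qed.

Lemma slice_delta (K : fieldType) a b c (T : tensor K a b c) i j k :
  slice T (fun i' => (i' == i)%:R) j k = T i j k.
Proof.
rewrite mxE (bigD1 i) //= eqxx mul1r big1 ?addr0 // => i' /negbTE ->; by rewrite mul0r.
Qed.

Theorem mainTheorem6 (R : realType) (a b : nat) (T : tensor R[i] a b b) :
  (a <= b)%N ->
  concise T ->
  bounded_rank T b.-1 ->
  primitive T b.-1 ->
  ~ has_border_rank T b.
Proof.
move=> _ [c1 c2 c3] [br1 [al0 br2] br3] prim [[u [v [w conv]]] _].
destruct b as [|m]; first by rewrite minnn in br3.
set K := R[i] in T c1 c2 c3 br1 br2 br3 prim u v w conv *.
set N := fun al => (slice T al)^T.
apply: prim; right.
have := @main_alg K a m N.
apply.
- by move=> al be t; rewrite /N slice_lin linearD /= linearZ.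
- move=> al; rewrite /N det_tr; apply/eqP; apply: contraT => dN.
  have : slice T al \in unitmx by rewrite unitmxE unitfE.
  by rewrite -row_free_unit /row_free; move: (br1 al); rewrite /= => h /eqP E; rewrite E ltnn in h.
- set S := fun n (i : 'I_a) (j k : 'I_m.+1) => \sum_(l < m.+1) u n l i * v n l j * w n l k.
  have Hent : forall i j k, cv S T (fun t => t i j k) by move=> i j k; exact: conv.
  have symT : forall al be ga, slice T al *m \adj (slice T be) *m slice T ga =
                               slice T ga *m \adj (slice T be) *m slice T al.
    move=> al be ga; apply/eqP; rewrite -subr_eq0; apply/eqP/matrixP => i j.
    rewrite [RHS]mxE.
    pose f := fun t : tensor K a m.+1 m.+1 =>
      (slice t al *m \adj (slice t be) *m slice t ga - slice t ga *m \adj (slice t be) *m slice t al) i j.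
    have hf : cv S T f.
      apply: (@mcv_sub _ _ _ _ S T _ _ (fun t => slice t al *m \adj (slice t be) *m slice t ga)
                        (fun t => slice t ga *m \adj (slice t be) *m slice t al)).
      + by apply: mcv_mul; [apply: mcv_mul; [|apply: mcv_adj]|]; apply: mcv_slice.
      + by apply: mcv_mul; [apply: mcv_mul; [|apply: mcv_adj]|]; apply: mcv_slice.
    apply: (cv_lim0 hf) => n; rewrite /f /S !slice_dec strassen_prod subrr mxE //.
  move=> al be ga; rewrite /N -!trmx_adj -!trmx_mul !mulmxA.
  by rewrite symT.
- move=> x hx; apply/matrixP => z k; rewrite ord1 mxE.
  apply: (c3 (fun k => x 0 k)) => i j.
  have := congr1 (fun M : 'M[K]_(1, m.+1) => M 0 j) (hx (fun i' => (i' == i)%:R)).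
  rewrite /= !mxE => h; apply: (etrans _ h); apply: eq_bigr => k' _; rewrite /N mxE slice_delta //.
- move=> x hx; apply/matrixP => j z; rewrite ord1 mxE.
  apply: (c2 (fun j => x j 0)) => i k.
  have := congr1 (fun M : 'M[K]_(m.+1, 1) => M k 0) (hx (fun i' => (i' == i)%:R)).
  rewrite /= !mxE => h; apply: (etrans _ h); apply: eq_bigr => j' _; rewrite /N mxE slice_delta mulrC //.
- by exists al0; rewrite /N mxrank_tr br2.
Qed.
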